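(* Let $d\ge 2$. There exist constants $C>1$ and $c\in(0,1)$ depending only on $d$ such that the following holds for every finite field $\mathbb F_q$ of characteristic greater than two. Let $P=\{x\in\mathbb F_q^d: x_1^2+\cdots+x_{d-1}^2=x_d\}$, let $\pi:\mathbb F_q^d\to\mathbb F_q^{d-1}$ be $\pi(x_1,\ldots,x_d)=(x_1,\ldots,x_{d-1})$, and let $E\subset P$, $F\subset\mathbb F_q^d$. If $|E||\pi(F)|\ge Cq^d$, then $|\Pi(E,F)|\ge c\,q$.
   Context: $\mathbb F_q$ is a finite field with $q$ elements and characteristic greater than two. For $E,F\subset\mathbb F_q^d$, $\Pi(E,F)=\{x\cdot y: x\in E,\ y\in F\}$ with $x\cdot y=\sum_i x_iy_i$. *)

(* Defs.v *)
From Stdlib Require Import Reals.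
From mathcomp Require Import all_boot all_order all_algebra.
Set Implicit Arguments. Unset Strict Implicit. Unset Printing Implicit Defensive.
Import GRing.Theory.
Local Open Scope ring_scope.

(* Vectors of F_q^d are row vectors 'rV[F]_d, coordinates x 0 i, i : 'I_d
   (coordinate i corresponds to x_{i+1} of the paper). *)

Definition dotv (F : fieldType) (d : nat) (x y : 'rV[F]_d) : F :=
  \sum_(i < d) x 0 i * y 0 i.

(* P = { x : x_1^2 + ... + x_{d-1}^2 = x_d }.  The right-hand side
   sum over the single index i = d-1 is exactly x_d (for d >= 1). *)
Definition paraboloid (F : finFieldType) (d : nat) : {set 'rV[F]_d} :=
  [set x : 'rV[F]_d |
     \sum_(i < d | (i.+1 < d)%N) x 0 i ^+ 2
       == \sum_(i < d | (i : nat) == d.-1) x 0 i].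

Definition proj (F : fieldType) (d : nat) (x : 'rV[F]_d) : 'rV[F]_(d.-1) :=
  \row_(j < d.-1) x 0 (widen_ord (leq_pred d) j).

Definition proj_set (F : finFieldType) (d : nat) (G : {set 'rV[F]_d})
  : {set 'rV[F]_(d.-1)} := [set proj x | x in G].

Definition dot_set (F : finFieldType) (d : nat) (E G : {set 'rV[F]_d})
  : {set F} := [set dotv x y | x in E, y in G].

(* Main.v *)
Require Import Defs.
From Stdlib Require Import Reals.
From mathcomp Require Import all_boot all_order all_algebra.
From mathcomp Require Import zify ring.
Set Implicit Arguments. Unset Strict Implicit. Unset Printing Implicit Defensive.
Import Order.TTheory GRing.Theory Num.Theory.
Local Open Scope ring_scope.

Lemma CS (R : realDomainType) (I : finType) (P : pred I) (z : I -> R) :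
  (\sum_(i | P i) z i) ^+ 2 <= #|P|%:R * \sum_(i | P i) z i ^+ 2.
Proof.
set S1 := \sum_(i | P i) z i; set S2 := \sum_(i | P i) z i ^+ 2.
have H : \sum_(i | P i) \sum_(j | P j) (z i - z j) ^+ 2 = 2%:R * (#|P|%:R * S2 - S1 ^+ 2).
  transitivity (\sum_(i | P i) (#|P|%:R * z i ^+ 2 + S2 - 2%:R * z i * S1)).
    apply: eq_bigr => i Pi.
    rewrite (eq_bigr (fun j => z i ^+ 2 + z j ^+ 2 - 2%:R * z i * z j)); last first.
      by move=> j _; ring.
    rewrite sumrB big_split /= sumr_const -mulr_sumr /S1 /S2; ring.
  rewrite sumrB big_split /= sumr_const -mulr_sumr -/S2 -mulr_suml -/S1.
  rewrite -mulr_sumr -/S1; ring.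
have : 0 <= \sum_(i | P i) \sum_(j | P j) (z i - z j) ^+ 2.
  by apply: sumr_ge0 => i _; apply: sumr_ge0 => j _; apply: sqr_ge0.
rewrite H pmulr_rge0 ?ltr0n // subr_ge0 //.
Qed.

Section GL.
Variable F : finFieldType.
Local Notation q := #|F|.

Lemma dotvDl n (v w a : 'rV[F]_n) : dotv (v + w) a = dotv v a + dotv w a.
Proof. by rewrite /dotv -big_split /=; apply: eq_bigr => i _; rewrite mxE mulrDl. Qed.

Lemma dotvZl n k (v a : 'rV[F]_n) : dotv (k *: v) a = k * dotv v a.
Proof. by rewrite /dotv mulr_sumr; apply: eq_bigr => i _; rewrite mxE mulrA. Qed.

Lemma dotvBr n (v a b : 'rV[F]_n) : dotv v (a - b) = dotv v a - dotv v b.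
Proof. by rewrite /dotv -sumrB; apply: eq_bigr => i _; rewrite !mxE mulrBr. Qed.

Lemma dotv_delta n (i : 'I_n) (a : 'rV[F]_n) : dotv (delta_mx 0 i) a = a 0 i.
Proof.
rewrite /dotv (bigD1 i) //= big1 => [|j /negbTE ji]; first by rewrite mxE !eqxx mul1r addr0.
by rewrite mxE ji andbF mul0r.
Qed.

Lemma fiber_le n (a : 'rV[F]_n) c c' : a != 0 ->
  (#|[set v : 'rV[F]_n | dotv v a == c]| <= #|[set v : 'rV[F]_n | dotv v a == c']|)%N.
Proof.
move=> a0.
have [i ai]: exists i, a 0 i != 0.
  apply/existsP; apply: contraR a0 => /existsPn H; apply/eqP/matrixP => x j.
  by rewrite ord1 mxE; apply/eqP; move: (H j); rewrite negbK.
pose f := fun v : 'rV[F]_n => v + ((c' - c) / a 0 i) *: delta_mx 0 i.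
have finj : injective f by move=> x y; rewrite /f => /addIr.
rewrite -(card_imset _ finj); apply: subset_leq_card; apply/subsetP => y /imsetP [x].
rewrite inE => /eqP xc -> ; rewrite inE /f dotvDl dotvZl dotv_delta xc divfK //.
by rewrite addrC subrK.
Qed.

Lemma fiber_card n (a : 'rV[F]_n) c : a != 0 ->
  (q * #|[set v : 'rV[F]_n | dotv v a == c]| = q ^ n)%N.
Proof.
move=> a0.
have tot : (\sum_(c' : F) #|[set v : 'rV[F]_n | dotv v a == c']| = q ^ n)%N.
  have -> : (q ^ n = #|{: 'rV[F]_n}|)%N by rewrite card_mx mul1n.
  rewrite -sum1_card.
  rewrite (eq_bigr (fun v => \sum_(c' : F) (nat_of_bool (dotv v a == c')))); last first.
    move=> v _; rewrite (bigD1 (dotv v a)) //= eqxx big1 // => t /negbTE.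
    by rewrite eq_sym => ->.
  rewrite exchange_big /=; apply: eq_bigr => c' _.
  rewrite -sum1_card big_mkcond /=; apply: eq_bigr => v _; rewrite inE.
  by case: eqP.
rewrite -tot (eq_bigr (fun _ => #|[set v : 'rV[F]_n | dotv v a == c]|)).
  by rewrite sum_nat_const.
by move=> c' _; apply/eqP; rewrite eqn_leq !fiber_le.
Qed.

Definition K n (w w' : 'rV[F]_n * F) : nat :=
  \sum_(v : 'rV[F]_n) (nat_of_bool (dotv v w.1 + w.2 == dotv v w'.1 + w'.2)%R).

Lemma Kdiag n (w : 'rV[F]_n * F) : K w w = (q ^ n)%N.
Proof.
rewrite /K (eq_bigr (fun _ => 1%N)) ?sum1_card ?card_mx ?mul1n // => v _.
by rewrite eqxx.
Qed.

Lemma Koff n (w w' : 'rV[F]_n * F) : w != w' -> (q * K w w' <= q ^ n)%N.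
Proof.
case: w w' => a b [a' b'] /= neq.
have [e|aa] := eqVneq a a'.
  subst a'.
  have bb : b != b' by apply/eqP => E; rewrite E eqxx in neq.
  rewrite /K big1 ?muln0 // => v _ /=.
  by rewrite (inj_eq (addrI _)) (negbTE bb).
rewrite -(@fiber_card _ (a - a') (b' - b)); last by rewrite subr_eq0.
rewrite leq_mul2l; apply/orP; right.
rewrite -sum1_card big_mkcond /= /K; apply: leq_sum => v _.
rewrite inE dotvBr.
have -> : (dotv v a + b == dotv v a' + b') = (dotv v a - dotv v a' == b' - b).
  by rewrite -[LHS]subr_eq0 -[RHS]subr_eq0; congr (_ == 0); ring.
by case: eqP.
Qed.

Definition Xf n (W : {set 'rV[F]_n * F}) (p : 'rV[F]_n * F) : nat :=
  \sum_(w in W) (nat_of_bool (dotv p.1 w.1 + w.2 == p.2)%R).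

Lemma sum_indF (c : F) : (\sum_(t : F) (nat_of_bool (c == t)) = 1)%N.
Proof.
rewrite (bigD1 c) //= eqxx big1 // => t /negbTE.
by rewrite eq_sym => ->.
Qed.

Lemma sumX n (W : {set 'rV[F]_n * F}) : (\sum_p Xf W p = #|W| * q ^ n)%N.
Proof.
rewrite /Xf exchange_big /= -sum_nat_const; apply: eq_bigr => w _.
rewrite -(pair_bigA _ (fun v t => nat_of_bool (dotv v w.1 + w.2 == t)%R)) /=.
transitivity (\sum_(v : 'rV[F]_n) 1)%N; first by apply: eq_bigr => v _; rewrite sum_indF.
by rewrite sum1_card card_mx mul1n.
Qed.

Lemma sumX2 n (W : {set 'rV[F]_n * F}) :
  (q * \sum_p Xf W p ^ 2 <= #|W| * q ^ n.+1 + #|W| ^ 2 * q ^ n)%N.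
Proof.
have -> : (\sum_p Xf W p ^ 2 = \sum_(w in W) \sum_(w' in W) K w w')%N.
  transitivity (\sum_p \sum_(w in W) \sum_(w' in W)
     ((nat_of_bool (dotv p.1 w.1 + w.2 == p.2)%R) * (nat_of_bool (dotv p.1 w'.1 + w'.2 == p.2)%R)))%N.
    apply: eq_bigr => p _; rewrite /Xf expnS expn1 big_distrl /=.
    by apply: eq_bigr => w _; rewrite big_distrr.
  rewrite exchange_big /=; apply: eq_bigr => w _.
  rewrite exchange_big /=; apply: eq_bigr => w' _.
  rewrite -(pair_bigA _ (fun v t => nat_of_bool (dotv v w.1 + w.2 == t)%R * nat_of_bool (dotv v w'.1 + w'.2 == t)%R)%N) /=.
  apply: eq_bigr => v _.
  rewrite (bigD1 (dotv v w.1 + w.2)) //= eqxx mul1n big1 ?addn0.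
    by rewrite eq_sym.
  by move=> t /negbTE; rewrite eq_sym => ->.
rewrite big_distrr /=.
apply: (@leq_trans (\sum_(w in W) (q ^ n.+1 + #|W| * q ^ n))%N).
  apply: leq_sum => w wW.
  rewrite big_distrr /= (bigD1 w) //= Kdiag -expnS leq_add2l.
  apply: (@leq_trans (\sum_(w' in W) q ^ n)%N); last by rewrite sum_nat_const.
  rewrite [X in (_ <= X)%N](bigD1 w) //= -[X in (X <= _)%N]add0n leq_add //.
  by apply: leq_sum => w' /andP [_ ww]; apply: Koff; rewrite eq_sym.
by rewrite sum_nat_const mulnDr mulnA -[(#|W| ^ 2)%N]mulnn.
Qed.

Lemma GL n (S W : {set 'rV[F]_n * F}) :
  ((q * \sum_(p in S) Xf W p)%:R - (#|S| * #|W|)%:R : int) ^+ 2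
    <= (#|S| * #|W| * q ^ n.+2)%:R.
Proof.
pose z p : int := (q * Xf W p)%:R - #|W|%:R.
have e1 : ((q * \sum_(p in S) Xf W p)%:R - (#|S| * #|W|)%:R : int) = \sum_(p in S) z p.
  rewrite sumrB sumr_const -natr_sum big_distrr /= natrM.
  by rewrite mulr_natl.
rewrite e1.
apply: le_trans (CS _ _) _.
apply: (@le_trans _ _ (#|S|%:R * \sum_p z p ^+ 2)).
  rewrite ler_wpM2l ?ler0n //.
  rewrite [X in _ <= X](bigID (fun p => p \in S)) /= lerDl.
  by apply: sumr_ge0 => p _; apply: sqr_ge0.
rewrite -mulnA natrM ler_wpM2l ?ler0n //.
have hB := sumX W.
have hA := sumX2 W.
have ez : \sum_p z p ^+ 2 = q%:R ^+ 2 * (\sum_p Xf W p ^ 2)%N%:R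
      - 2%:R * q%:R * #|W|%:R * (\sum_p Xf W p)%N%:R + (q ^ n * q)%N%:R * #|W|%:R ^+ 2.
  rewrite (eq_bigr (fun p => q%:R ^+ 2 * (Xf W p ^ 2)%N%:R - 2%:R * q%:R * #|W|%:R * (Xf W p)%:R + #|W|%:R ^+ 2)); last first.
    by move=> p _; rewrite /z !natrM; ring.
  rewrite big_split sumrB /= sumr_const -!mulr_sumr -!natr_sum (@eq_card_prod _ _ xpredT) // card_mx mul1n mulr_natl.
  by rewrite [in RHS]mulr_natl.
rewrite ez hB.
have hA' : (q%:R * (\sum_p Xf W p ^ 2)%N%:R <= #|W|%:R * (q%:R * (q ^ n)%N%:R) + (#|W|%:R * #|W|%:R) * (q ^ n)%N%:R :> int).
  by move: hA; rewrite expnS -mulnn -(ler_nat int) !natrD !natrM.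
rewrite !expnS !natrM.
set A := (\sum_p Xf W p ^ 2)%N%:R in hA' *.
set Q := (q ^ n)%N%:R in hA' *.
set qq := q%:R in hA' *.
set w := #|W|%:R in hA' *.
have q0 : 0 <= qq by rewrite ler0n.
have h2 := ler_wpM2l q0 hA'.
have -> : qq ^+ 2 * A - 2%:R * qq * w * (w * Q) + Q * qq * w ^+ 2 = qq * (qq * A) - qq * (w * w * Q) by ring.
rewrite lerBlDr; apply: le_trans h2 _.
rewrite le_eqVlt; apply/orP; left; apply/eqP; ring.
Qed.
End GL.


Section App.
Variable F : finFieldType.
Local Notation q := #|F|.

Lemma App n (A B : finType) (E' : {set A}) (T : {set F}) (Y : {set B})
  (f : A * F -> 'rV[F]_n * F) (g : B -> 'rV[F]_n * F) (dot : A -> B -> F) :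
  {in setX E' T &, injective f} -> {in Y &, injective g} ->
  (forall x y, x \in E' -> y \in Y -> dot x y \in T) ->
  (forall x t y, x \in E' -> y \in Y ->
     (dotv (f (x, t)).1 (g y).1 + (g y).2 == (f (x, t)).2) = (dot x y == t)) ->
  (#|E'| * #|Y| * (q - #|T|) ^ 2 <= #|T| * q ^ n.+2)%N.
Proof.
move=> finj ginj inT compat.
have := GL (f @: setX E' T) (g @: Y).
rewrite (card_in_imset finj) (card_in_imset ginj) cardsX.
have -> : (\sum_(p in f @: setX E' T) Xf (g @: Y) p = #|E'| * #|Y|)%N.
  rewrite big_imset //=.
  rewrite (eq_bigl (fun p => (p.1 \in E') && (p.2 \in T))); last by case=> x t; rewrite in_setX.
  transitivity (\sum_(p | (p.1 \in E') && (p.2 \in T)) \sum_(y in Y) nat_of_bool (dot p.1 y == p.2))%N.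
    apply: eq_bigr => -[x t] /= /andP [xE tT].
    rewrite /Xf big_imset //=; apply: eq_bigr => y yY.
    by rewrite compat.
  rewrite -(pair_big (mem E') (mem T) (fun x t => \sum_(y in Y) nat_of_bool (dot x y == t)))%N /=.
  rewrite -sum_nat_const; apply: eq_bigr => x xE.
  rewrite exchange_big /= -sum1_card; apply: eq_bigr => y yY.
  rewrite (bigD1 (dot x y)) ?inT //= eqxx big1 // => t /andP [_].
  by rewrite eq_sym => /negbTE ->.
set e := (#|E'| * #|Y|)%N; set t := #|T|.
have tq : (t <= q)%N := max_card T.
have -> : (#|E'| * t * #|Y| = e * t)%N by rewrite /e; ring.
set Q := (q ^ n.+2)%N.
move=> H.
clearbody e t Q.
have [e0|epos] := posnP e; first by rewrite e0.
rewrite -(ler_nat int) !natrM natrB //.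
have ep : (0 : int) < e%:R by rewrite ltr0n.
rewrite -(ler_pM2r ep).
have -> : e%:R * ((q%:R - t%:R) * (q%:R - t%:R)) * e%:R = ((q * e)%:R - (e * t)%:R : int) ^+ 2.
  by rewrite !natrM; ring.
apply: (le_trans H); rewrite !natrM le_eqVlt; apply/orP; left; apply/eqP; ring.
Qed.
End App.


Section Main.
Variable F : finFieldType.
Local Notation q := #|F|.
Variable n : nat.

Lemma dotv_split (x y : 'rV[F]_n.+1) :
  dotv x y = dotv (proj x) (proj y) + x 0 ord_max * y 0 ord_max.
Proof.
rewrite /dotv big_ord_recr /=; congr (_ + _); apply: eq_bigr => i _.
by rewrite !mxE; congr (x 0 _ * y 0 _); apply: val_inj.
Qed.

Lemma rv_ext (x y : 'rV[F]_n.+1) :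
  proj x = proj y -> x 0 ord_max = y 0 ord_max -> x = y.
Proof.
move=> /matrixP hp hd; apply/matrixP => i j; rewrite ord1.
have [jn|jn] := ltnP j n.
  have := hp 0 (Ordinal jn); rewrite !mxE.
  by have -> : widen_ord (leq_pred n.+1) (Ordinal jn) = j by apply: val_inj.
have -> : j = ord_max by apply: val_inj; apply/eqP; rewrite eqn_leq jn -ltnS ltn_ord.
by [].
Qed.

Lemma parab (x : 'rV[F]_n.+1) :
  x \in paraboloid F n.+1 -> x 0 ord_max = dotv (proj x) (proj x).
Proof.
rewrite inE => /eqP H.
have L : \sum_(i < n.+1 | (i.+1 < n.+1)%N) x 0 i ^+ 2 = dotv (proj x) (proj x).
  rewrite big_mkcond big_ord_recr /= ltnn addr0 /dotv; apply: eq_bigr => i _.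
  by rewrite ltnS ltn_ord /proj !mxE -expr2; congr (x 0 _ ^+ 2); apply: val_inj.
have R : \sum_(i < n.+1 | (i : nat) == n.+1.-1) x 0 i = x 0 ord_max.
  rewrite big_mkcond big_ord_recr /= eqxx big1 ?add0r // => i _.
  by rewrite /= ltn_eqF.
by rewrite -R -H L.
Qed.

Lemma dotvZr m k (v a : 'rV[F]_m) : dotv v (k *: a) = k * dotv v a.
Proof. by rewrite /dotv mulr_sumr; apply: eq_bigr => i _; rewrite mxE mulrCA. Qed.

Lemma dot_in (E G : {set 'rV[F]_n.+1}) x y : x \in E -> y \in G -> dotv x y \in dot_set E G.
Proof. by move=> xE yG; apply/imset2P; exists x y. Qed.

Lemma key (E G : {set 'rV[F]_n.+1}) : E \subset paraboloid F n.+1 ->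
  (#|E| * #|proj_set G| * (q - #|dot_set E G|) ^ 2 <= 2 * #|dot_set E G| * q ^ n.+2)%N.
Proof.
move=> EP.
set T := dot_set E G; set U := proj_set G.
set Z := [set x : 'rV[F]_n.+1 | x 0 ord_max != 0].
have h1 : (#|E :&: Z| * #|G| * (q - #|T|) ^ 2 <= #|T| * q ^ n.+2)%N.
  apply: (@App F n _ _ (E :&: Z) T G
     (fun p => ((p.1 0 ord_max)^-1 *: proj p.1, p.2 / p.1 0 ord_max))
     (fun y => (proj y, y 0 ord_max)) (@dotv F n.+1)).
  - move=> [x t] [x' t'] /=; rewrite !in_setX !in_setI !inE.
    move=> /andP[/andP[xE xd] _] /andP[/andP[x'E x'd] _] [e1 e2].
    have xP := parab (subsetP EP x xE); have x'P := parab (subsetP EP x' x'E).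
    set a := x 0 ord_max in xd xP e1 e2; set a' := x' 0 ord_max in x'd x'P e1 e2.
    have hpx : proj x' = (a' / a) *: proj x.
      by rewrite -[proj x']scale1r -(mulfV x'd) -scalerA -e1 scalerA.
    have aa : a = a'.
      have H : a' = a' / a * (a' / a * a) by rewrite {1}x'P hpx dotvZl dotvZr -xP.
      have : a' * (a - a') = 0.
        have -> : a' * (a - a') = a * (a' - a' / a * (a' / a * a)) by field.
        by rewrite -H subrr mulr0.
      by move/eqP; rewrite mulf_eq0 (negbTE x'd) subr_eq0 => /eqP.
    have ex : x = x'.
      apply: rv_ext => //; by rewrite hpx -aa divff // scale1r.
    rewrite -ex; congr (_, _).
    by move: e2; rewrite aa => /(mulIf (invr_neq0 x'd)).
  - by move=> y y' _ _ [e1 e2]; apply: rv_ext.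
  - by move=> x y; rewrite in_setI => /andP [xE _] yG; apply: dot_in.
  - move=> x t y; rewrite in_setI inE => /andP [_ xd] _ /=.
    rewrite dotv_split dotvZl -(inj_eq (mulfI xd)).
    by congr (_ == _); field.
have h2 : (#|E :\: Z| * #|U| * (q - #|T|) ^ 2 <= #|T| * q ^ n.+2)%N.
  apply: (@App F n _ _ (E :\: Z) T U
     (fun p => (proj p.1, p.2)) (fun u => (u, 0)) (fun x u => dotv (proj x) u)).
  - move=> [x t] [x' t'] /=; rewrite !in_setX !in_setD !inE !negbK.
    move=> /andP [/andP [/eqP x0 _] _] /andP [/andP [/eqP x0' _] _] [e1 ->].
    by rewrite (rv_ext e1) // x0 x0'.
  - by move=> u u' _ _ [].
  - move=> x u; rewrite in_setD inE negbK => /andP [/eqP x0 xE] /imsetP [y yG ->].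
    by rewrite -[X in X \in _]addr0 -(mul0r (y 0 ord_max)) -x0 -dotv_split; apply: dot_in.
  - by move=> x t u _ _ /=; rewrite addr0.
have hU : (#|U| <= #|G|)%N by apply: leq_imset_card.
rewrite -(cardsID Z E) mulnDl mulnDl mul2n -addnn.
rewrite mulnDl; apply: leq_add => //.
apply: leq_trans h1; rewrite leq_mul2r leq_mul2l hU !orbT //.
Qed.
End Main.

Local Close Scope ring_scope.
From Stdlib Require Import Lra.
Lemma arith (q t X P : nat) : (0 < q)%N -> (0 < P)%N ->
  (8 * (q * P) <= X)%N -> (X * (q - t) ^ 2 <= 2 * t * (q * (q * P)))%N -> (q <= 2 * t)%N.
Proof.
move=> q0 P0 H K; case: (leqP q (2 * t)) => // lt; exfalso.
set s := (q - t)%N in K.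
have hs : (q <= 2 * s)%N by rewrite /s; lia.
have hq : (q * q <= 4 * (s * s))%N.
  have := leq_mul hs hs.
  have -> : (2 * s * (2 * s) = 4 * (s * s))%N by ring.
  by [].
have h1 : (8 * (q * P) * (q * q) <= X * (q * q))%N by rewrite leq_mul2r H orbT.
have h2 : (X * (q * q) <= 4 * (X * s ^ 2))%N.
  have -> : (4 * (X * s ^ 2) = X * (4 * (s * s)))%N by ring.
  by rewrite leq_mul2l hq orbT.
have h3 : (4 * (X * s ^ 2) <= 4 * (2 * t * (q * (q * P))))%N by rewrite leq_mul2l K orbT.
have h4 := leq_trans h1 (leq_trans h2 h3).
have qqP : (0 < q * q * P)%N by rewrite !muln_gt0 q0 P0.
have : (q * (q * q * P) <= t * (q * q * P))%N.
  rewrite -(leq_pmul2l (isT : (0 < 8)%N)); move: h4.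
  have -> : (8 * (q * P) * (q * q) = 8 * (q * (q * q * P)))%N by ring.
  by have -> : (4 * (2 * t * (q * (q * P))) = 8 * (t * (q * q * P)))%N by ring.
rewrite leq_pmul2r // => qt; lia.
Qed.

Open Scope R_scope.
Lemma consts : 1 < INR 8 /\ 0 < Rinv (INR 2) /\ Rinv (INR 2) < 1.
Proof. simpl; repeat split; lra. Qed.
Lemma fin_R a b : INR a <= INR 2 * INR b -> Rinv (INR 2) * INR a <= INR b.
Proof. simpl; intro; lra. Qed.
Close Scope R_scope.

Local Open Scope ring_scope.
Unset Implicit Arguments.
Theorem lemma3p5 (d : nat) (hd : (2 <= d)%N) :
  exists C c : R,
    Rlt 1 C /\ Rlt 0 c /\ Rlt c 1 /\
    forall (F : finFieldType),
      (forall p : nat, p \in [pchar F] -> (2 < p)%N) ->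
      forall E G : {set 'rV[F]_d},
        E \subset paraboloid F d ->
        Rle (Rmult C (INR (#|F| ^ d))) (INR (#|E| * #|proj_set G|)) ->
        Rle (Rmult c (INR #|F|)) (INR #|dot_set E G|).
Proof.
case: d hd => [//|n] _.
exists (INR 8), (Rinv (INR 2)).
have [c1 [c2 c3]] := consts; split; [exact c1|split; [exact c2|split; [exact c3|]]].
move=> F _ E G EP H.
rewrite <- mult_INR in H; apply INR_le in H; move/ssrnat.leP: H => H.
have K := key G EP.
have q0 : (0 < #|F|)%N by apply/card_gt0P; exists 0.
have P0 : (0 < #|F| ^ n)%N by rewrite expn_gt0 q0.
have := @arith #|F| #|dot_set E G| (#|E| * #|proj_set G|) (#|F| ^ n) q0 P0.
rewrite -!expnS => /(_ H K) /ssrnat.leP h.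
apply le_INR in h; rewrite mult_INR in h; exact: fin_R.
Qed.
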